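(* Let $h:Q\to P$ be an $\iota$-map of positive opetopes, $q_1,q_2\in Q-\ker(h)$, and $l<k$ natural numbers such that $\gamma^{(k+1)}(q_1)<^-\gamma^{(k+1)}(q_2)$, $\gamma^{(j)}(q_1)<^+\gamma^{(j)}(q_2)$ for all $j$ with $l<j\le k$, and $\gamma^{(l)}(q_1)=\gamma^{(l)}(q_2)$. Then there is $l'$ with $l\le l'<k$ such that $h(\gamma^{(k+1)}(q_1))<^-h(\gamma^{(k+1)}(q_2))$, $h(\gamma^{(j)}(q_1))<^+h(\gamma^{(j)}(q_2))$ for all $j$ with $l'<j\le k$, and $h(\gamma^{(l')}(q_1))=h(\gamma^{(l')}(q_2))$.
   Context: A positive hypergraph $S$ consists of finite sets $S_k$ ($k\in\mathbb{N}$), only finitely many nonempty, functions $\gamma:S_{k+1}\to S_k$, and for each $k$ an assignment $\delta$ sending each $a\in S_{k+1}$ to a nonempty subset $\delta(a)\subseteq S_k$, with $\delta(a)$ a singleton for $a\in S_1$. A face is identified with its singleton; $\gamma(X)=\{\gamma(a):a\in X\}$, $\delta(X)=\bigcup_{a\in X}\delta(a)$. For $k>0$ the lower order $<^-$ on $S_k$ is the transitive closure of: $a\lhd b$ iff $\gamma(a)\in\delta(b)$. The upper order $<^+$ on $S_k$ is the transitive closure of: $a\lhd b$ iff there is $\alpha\in S_{k+1}$ with $a\in\delta(\alpha)$, $\gamma(\alpha)=b$. $a\perp^{\pm}b$ iff $a<^{\pm}b$ or $b<^{\pm}a$. A positive opetopic cardinal: $S_0\ne\emptyset$; globularity ($\gamma\gamma(a)=\gamma\delta(a)-\delta\delta(a)$,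 $\delta\gamma(a)=\delta\delta(a)-\gamma\delta(a)$ for $\dim a\ge2$); each $<^+$ a strict order, linear on $S_0$; for $k>0$, $\perp^-\cap\perp^+=\emptyset$ on $S_k$; for $x\in S_{k-1}$, $\{a:\gamma(a)=x\}$ and $\{a:x\in\delta(a)\}$ linearly ordered by $<^+$. A positive opetope: additionally $|P_m-\delta(P_{m+1})|\le1$ for all $m$. $\gamma^{(k)}(p)=p$ if $\dim p\le k$, else $\gamma^{(k)}(p)=\gamma(\gamma^{(k+1)}(p))$. An $\iota$-map $h:Q\to P$ of positive opetopes is a function on faces with: $\dim h(q)\le\dim q$; $h(\gamma^{(k)}(q))=\gamma^{(k)}(h(q))$ for $k\ge0$, $q\in Q_{k+1}$; and, with $\ker(h)=\{q:\dim q>\dim h(q)\}$, for $q\in Q_{k+1}$: if $\dim h(q)=k+1$, $h$ restricts to a bijection $\delta(q)-\ker(h)\to\delta(h(q))$; if $\dim h(q)=k$, to a bijection $\delta(q)-\ker(h)\to\{h(q)\}$; if $\dim h(q)<k$, $\delta(q)\subseteq\ker(h)$. *)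

(* Defs.v *)
From mathcomp Require Import all_boot.
Set Implicit Arguments. Unset Strict Implicit. Unset Printing Implicit Defensive.

(* S_k = [set a | dim a == k]; gam/del are meaningful only on faces of
   positive dimension (their values on 0-dimensional faces are irrelevant). *)
Record hgraph := HGraph {
  face :> finType;
  dim : face -> nat;
  gam : face -> face;
  del : face -> {set face}
}.

Section Defs.
Variable S : hgraph.
Implicit Types a b x : S.

Definition is_pos_hypergraph : Prop :=
  forall a, 0 < dim a ->
    [/\ dim (gam a) = (dim a).-1,
        del a != set0,
        {in del a, forall b, dim b = (dim a).-1} &
        (dim a = 1 -> #|del a| = 1)].

Definition gamS (X : {set S}) : {set S} := (@gam S) @: X.
Definition delS (X : {set S}) : {set S} := \bigcup_(a in X) del a.

Definition lhd_minus : rel S := fun a b =>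
  [&& dim a == dim b, 0 < dim a & gam a \in del b].
Definition lhd_plus : rel S := fun a b =>
  (dim a == dim b) &&
  [exists al : S, [&& dim al == (dim a).+1, a \in del al & gam al == b]].

Definition lt_minus : rel S := fun a b =>
  [exists c, lhd_minus a c && connect lhd_minus c b].
Definition lt_plus : rel S := fun a b =>
  [exists c, lhd_plus a c && connect lhd_plus c b].

Definition perp_minus : rel S := fun a b => lt_minus a b || lt_minus b a.
Definition perp_plus : rel S := fun a b => lt_plus a b || lt_plus b a.

Definition is_globular : Prop :=
  forall a, 2 <= dim a ->
    [set gam (gam a)] = gamS (del a) :\: delS (del a) /\
    del (gam a) = delS (del a) :\: gamS (del a).

Definition is_cardinal_rest : Prop :=
  [/\
      (forall a b, dim a = 0 -> dim b = 0 -> a != b -> perp_plus a b),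
      (forall a b, 0 < dim a -> dim a = dim b ->
         ~~ (perp_minus a b && perp_plus a b)) &
      (forall x a b, dim a = (dim x).+1 -> dim b = (dim x).+1 -> a != b ->
         (gam a = x -> gam b = x -> perp_plus a b) /\
         (x \in del a -> x \in del b -> perp_plus a b))].

Definition is_pos_opetopic_cardinal : Prop :=
  [/\ is_pos_hypergraph,
      (exists a, dim a = 0),
      is_globular,
      (forall a, ~~ lt_plus a a) &
      is_cardinal_rest].

Definition is_pos_opetope : Prop :=
  is_pos_opetopic_cardinal /\
  forall m : nat,
    #|[set a | dim a == m] :\: delS [set b | dim b == m.+1]| <= 1.

(* gamma^(k)(p): p if dim p <= k, else gamma(gamma^(k+1)(p)) *)
Definition gk (k : nat) (p : S) : S := iter (dim p - k) (@gam S) p.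

End Defs.

Definition bij_onto (Q P : finType) (h : Q -> P) (A : {set Q}) (B : {set P}) :=
  {in A &, injective h} /\ h @: A = B.

Definition ker (Q P : hgraph) (h : Q -> P) : {set Q} :=
  [set q | dim (h q) < dim q].

Definition is_iota_map (Q P : hgraph) (h : Q -> P) : Prop :=
  [/\ forall q, dim (h q) <= dim q,
      forall (k : nat) (q : Q), dim q = k.+1 -> h (gk k q) = gk k (h q) &
      forall (k : nat) (q : Q), dim q = k.+1 ->
        [/\ dim (h q) = k.+1 -> bij_onto h (del q :\: ker h) (del (h q)),
            dim (h q) = k -> bij_onto h (del q :\: ker h) [set h q] &
            dim (h q) < k -> del q \subset ker h]].

(* Main.v *)
Require Import Defs.
From mathcomp Require Import all_boot.
From mathcomp Require Import zify.
Set Implicit Arguments. Unset Strict Implicit. Unset Printing Implicit Defensive.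
Lemma connect_map (T U : finType) (e : rel T) (e' : rel U) (f : T -> U) (inv : pred T) :
  (forall x y, inv x -> e x y -> inv y /\ (f x = f y \/ e' (f x) (f y))) ->
  forall x y, inv x -> connect e x y -> connect e' (f x) (f y).
Proof.
move=> H x y ix /connectP [p pth ->]; elim: p x ix pth => [|z p IH] x ix /=.
  by rewrite connect0.
case/andP=> exz pth; have [iz [->|e'xz]] := H _ _ ix exz; first exact: IH.
exact: connect_trans (connect1 e'xz) (IH _ iz pth).
Qed.

Lemma connect_inv (T : finType) (e : rel T) (A : Type) (f : T -> A) :
  (forall x y, e x y -> f x = f y) -> forall x y, connect e x y -> f x = f y.
Proof.
move=> H x y /connectP [p pth ->]; elim: p x pth => [|z p IH] x //= /andP [exz pth].
by rewrite (H _ _ exz) (IH _ pth).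
Qed.

Lemma ex_conn (T : finType) (e : rel T) x y :
  [exists c, e x c && connect e c y] -> connect e x y.
Proof. by case/existsP => c /andP [exc cy]; apply: connect_trans (connect1 exc) cy. Qed.

Lemma conn_ex (T : finType) (e : rel T) x y :
  connect e x y -> x = y \/ [exists c, e x c && connect e c y].
Proof.
case/connectP => [[|z p]] /= pth ->; first by left.
right; apply/existsP; exists z; case/andP: pth => -> pth /=.
by apply/connectP; exists p.
Qed.

Section HG.
Variables (S : hgraph) (HS : is_pos_hypergraph S).

Lemma dim_gam (x : S) : 0 < dim x -> dim (gam x) = (dim x).-1.
Proof. by move=> /HS []. Qed.

Lemma dim_del (x y : S) : 0 < dim x -> y \in del x -> dim y = (dim x).-1.
Proof. by move=> /HS [_ _ H _] /H. Qed.

Lemma dim_iter n (x : S) : n <= dim x -> dim (iter n (@gam S) x) = dim x - n.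
Proof.
elim: n => [|n IH] Hn /=; first by rewrite subn0.
have E := IH (ltnW Hn).
have P0 : 0 < dim (iter n (@gam S) x) by rewrite E; lia.
rewrite (dim_gam P0) E; lia.
Qed.

Lemma dim_gk j (x : S) : j <= dim x -> dim (gk j x) = j.
Proof. move=> H; rewrite /gk dim_iter ?leq_subr //; lia. Qed.

Lemma gk_small j (x : S) : dim x <= j -> gk j x = x.
Proof. by move=> H; rewrite /gk; move/eqP: H => ->. Qed.

Lemma gk_S k (x : S) : k < dim x -> gk k x = gam (gk k.+1 x).
Proof. move=> H; rewrite /gk; have -> : dim x - k = (dim x - k.+1).+1 by lia. by []. Qed.

Lemma gk_top m (x : S) : dim x = m.+1 -> gk m x = gam x.
Proof. by move=> H; rewrite /gk H subSnn. Qed.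

Lemma lhdm_gam (u v : S) : lhd_minus u v -> lhd_plus (gam u) (gam v).
Proof.
case/and3P => /eqP duv du gu.
have dv : 0 < dim v by rewrite -duv.
rewrite /lhd_plus (dim_gam du) (dim_gam dv) duv eqxx /=.
apply/existsP; exists v; rewrite gu eqxx andbT; apply/eqP; lia.
Qed.

Lemma ltm_gam (u v : S) : lt_minus u v -> lt_plus (gam u) (gam v).
Proof.
case/existsP => c /andP [uc cv]; apply/existsP; exists (gam c).
rewrite lhdm_gam //=.
apply: (connect_map (inv := predT)) cv => // x y _ /lhdm_gam H; split => //; by right.
Qed.

Lemma ltm_dim (u v : S) : lt_minus u v -> dim u = dim v /\ 0 < dim u.
Proof.
case/existsP => c /andP [/and3P [/eqP uc du _] cv]; split => //.
rewrite uc; apply: (connect_inv (f := @dim S)) cv => x y /and3P [/eqP -> _ _] //.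
Qed.

Lemma ltp_dim (u v : S) : lt_plus u v -> dim u = dim v.
Proof.
case/existsP => c /andP [/andP [/eqP uc _] cv].
rewrite uc; apply: (connect_inv (f := @dim S)) cv => x y /andP [/eqP -> _] //.
Qed.
End HG.
Section Iota.
Variables (Q P : hgraph) (h : Q -> P).
Hypotheses (HQ : is_pos_hypergraph Q) (HP : is_pos_hypergraph P) (Hh : is_iota_map h).

Lemma nkerE (q : Q) : (q \notin ker h) = (dim (h q) == dim q).
Proof. case: Hh => H _ _; by rewrite /ker inE -leqNgt eqn_leq H. Qed.

Lemma nker_dim (q : Q) : q \notin ker h -> dim (h q) = dim q.
Proof. by rewrite nkerE => /eqP. Qed.

Lemma nker_pass k (c : Q) e : dim c = k.+1 -> c \notin ker h -> e \in del c ->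
  e \notin ker h -> [/\ dim (h c) = k.+1, h e \in del (h c) & h (gam c) = gam (h c)].
Proof.
move=> dc nc ec ne; have dhc : dim (h c) = k.+1 by rewrite nker_dim.
case: Hh => _ Hg Hd; case: (Hd k c dc) => B _ _; case: (B dhc) => _ Him.
split => //; first by rewrite -Him; apply/imsetP; exists e => //; rewrite in_setD ne ec.
by rewrite -(gk_top dc) Hg // gk_top.
Qed.

Lemma ker_pass k (c : Q) e : dim c = k.+1 -> c \in ker h -> e \in del c ->
  e \notin ker h -> [/\ dim (h c) = k, h e = h c & h (gam c) = h c].
Proof.
move=> dc kc ec ne; case: Hh => Hle Hg Hd; case: (Hd k c dc) => _ B C.
have dhc : dim (h c) = k.
  move: kc; rewrite /ker inE dc ltnS leq_eqVlt => /orP [/eqP //|lt].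
  by move/subsetP: (C lt) => /(_ e ec); rewrite (negbTE ne).
case: (B dhc) => _ Him.
have : h e \in [set h c] by rewrite -Him; apply/imsetP; exists e => //; rewrite in_setD ne ec.
move/set1P => he; split => //.
by rewrite -(gk_top dc) Hg // gk_small // dhc.
Qed.

Lemma iter_comm n (q : Q) : q \notin ker h -> n <= dim q ->
  iter n (@gam Q) q \notin ker h /\ h (iter n (@gam Q) q) = iter n (@gam P) (h q).
Proof.
move=> nq; elim: n => [|n IH] Hn //=.
have [ny ey] := IH (ltnW Hn).
have dy : dim (iter n (@gam Q) q) = (dim q - n.+1).+1.
  rewrite dim_iter //; [lia | exact: ltnW].
have dhy := nker_dim ny.
have hg : h (gam (iter n (@gam Q) q)) = gam (h (iter n (@gam Q) q)).
  case: Hh => _ Hg _; rewrite -(gk_top dy) Hg // gk_top //; by rewrite dhy.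
split; last by rewrite hg ey.
rewrite nkerE hg (dim_gam HP) ?dhy ?dy // (dim_gam HQ) ?dy //.
Qed.

Lemma gk_comm j (q : Q) : q \notin ker h -> gk j q \notin ker h /\ h (gk j q) = gk j (h q).
Proof.
move=> nq; have dh := nker_dim nq.
rewrite /gk dh; apply: iter_comm => //; exact: leq_subr.
Qed.

Lemma lm_aux k : forall p (c : Q) e (x : P), path (@lhd_minus Q) c p -> dim c = k.+1 ->
  e \in del c -> e \notin ker h -> dim x = k.+1 -> gam x = h e -> last c p \notin ker h ->
  lt_minus x (h (last c p)).
Proof.
elim => [|c' p IH] c e x /=.
  move=> _ dc ec ne dx gx nc; have [dhc hec _] := nker_pass dc nc ec ne.
  by apply/existsP; exists (h c); rewrite connect0 andbT /lhd_minus dx dhc eqxx gx hec.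
move=> /andP [lcc pth] dc ec ne dx gx nl.
have [/eqP dcc' _ gcc'] := and3P lcc.
have dc' : dim c' = k.+1 by rewrite -dcc'.
have dgc : dim (gam c) = k by rewrite (dim_gam HQ) dc.
case: (boolP (c \in ker h)) => kc.
  have [dhc he hgc] := ker_pass dc kc ec ne.
  apply: (IH c' (gam c) x) => //; last by rewrite hgc -he.
  by rewrite nkerE hgc dhc dgc.
have [dhc hec hgc] := nker_pass dc kc ec ne.
have ngc : gam c \notin ker h by rewrite nkerE hgc (dim_gam HP) dhc // dgc.
have := IH c' (gam c) (h c) pth dc' gcc' ngc dhc (esym hgc) nl => H.
apply/existsP; exists (h c); rewrite /lhd_minus dx dhc eqxx gx hec /=.
exact: ex_conn H.
Qed.

Lemma lm (a1 a2 : Q) k : dim a1 = k.+1 -> a1 \notin ker h -> a2 \notin ker h ->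
  lt_minus a1 a2 -> lt_minus (h a1) (h a2).
Proof.
move=> d1 n1 n2 /existsP [c /andP [/and3P [/eqP d1c _ gc] /connectP [p pth E]]].
rewrite E in n2 *.
have dg : dim (gam a1) = k by rewrite (dim_gam HQ) d1.
have dh1 := nker_dim n1; rewrite d1 in dh1.
have hg : h (gam a1) = gam (h a1).
  by case: Hh => _ Hg _; rewrite -(gk_top d1) Hg // gk_top.
apply: (lm_aux (k:=k) (e:=gam a1) pth) => //; first by rewrite -d1c.
by rewrite nkerE hg (dim_gam HP) dh1 // dg.
Qed.

Lemma wk (x y : Q) : x \notin ker h -> connect (@lhd_plus Q) x y ->
  connect (@lhd_plus P) (h x) (h y).
Proof.
apply: (connect_map (inv := [pred q | q \notin ker h])) => u v /= nu.
case/andP => /eqP duv /existsP [al /and3P [/eqP dal ual /eqP gal]].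
have dhu := nker_dim nu.
case: (boolP (al \in ker h)) => kal.
  have [dha hu hg] := ker_pass dal kal ual nu.
  split; first by rewrite nkerE -gal hg dha (dim_gam HQ) dal.
  by left; rewrite hu -gal hg.
have [dha hu hg] := nker_pass dal kal ual nu.
have dhv : dim (h v) = dim u by rewrite -gal hg (dim_gam HP) dha.
split; first by rewrite nkerE dhv duv.
right; rewrite /lhd_plus /= dhu dhv eqxx /=; apply/existsP; exists (h al).
by rewrite dha eqxx hu -gal hg eqxx.
Qed.
End Iota.
Unset Implicit Arguments. Set Strict Implicit. Set Printing Implicit Defensive.
Theorem mainTheorem3 (Q P : hgraph) (h : Q -> P) (q1 q2 : Q) (l k : nat) :
  is_pos_opetope Q -> is_pos_opetope P -> is_iota_map h ->
  q1 \notin ker h -> q2 \notin ker h -> l < k ->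
  lt_minus (gk k.+1 q1) (gk k.+1 q2) ->
  (forall j : nat, l < j <= k -> lt_plus (gk j q1) (gk j q2)) ->
  gk l q1 = gk l q2 ->
  exists l' : nat,
    [/\ l <= l' < k,
        lt_minus (h (gk k.+1 q1)) (h (gk k.+1 q2)),
        (forall j : nat, l' < j <= k -> lt_plus (h (gk j q1)) (h (gk j q2))) &
        h (gk l' q1) = h (gk l' q2)].
Proof.
move=> [[HQ _ _ _ [_ HQd _]] _] [[HP _ _ HPirr _] _] Hh n1 n2 lk Hm Hp Hl.
have Hk := Hp k ltac:(apply/andP; split => //).
have [dm pm] := ltm_dim Hm.
have dp := ltp_dim Hk.
have d1 : k < dim q1.
  case: (leqP (dim q1) k) => // d1; exfalso.
  rewrite (gk_small (leqW d1)) (gk_small d1) in Hm Hk dm pm dp.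
  have d2 : dim q2 <= k.
    case: (leqP (dim q2) k) => // d2.
    by move: dm; rewrite (dim_gk HQ d2); lia.
  rewrite (gk_small (leqW d2)) (gk_small d2) in Hm Hk dm dp.
  move: (HQd _ _ pm dm); rewrite /perp_minus /perp_plus Hm Hk //.
have d2 : k < dim q2.
  case: (leqP (dim q2) k) => // d2; exfalso.
  rewrite (gk_small (leqW d2)) in dm.
  by move: dm; rewrite (dim_gk HQ d1); lia.
have [na1 ha1] := gk_comm HQ HP Hh k.+1 n1.
have [na2 ha2] := gk_comm HQ HP Hh k.+1 n2.
have da1 := dim_gk HQ d1.
have LM := lm HQ HP Hh da1 na1 na2 Hm.
have dh1 := nker_dim Hh n1.
have dh2 := nker_dim Hh n2.
have [_ hk1] := gk_comm HQ HP Hh k n1.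
have [_ hk2] := gk_comm HQ HP Hh k n2.
have neq : h (gk k q1) != h (gk k q2).
  rewrite hk1 hk2 (gk_S (x := h q1)) ?dh1 // (gk_S (x := h q2)) ?dh2 // -ha1 -ha2.
  apply/eqP => E; have := ltm_gam HP LM; rewrite E.
  by move: (HPirr (gam (h (gk k.+1 q2)))) => /negbTE ->.
have W : forall j, l < j <= k -> lt_plus (h (gk j q1)) (h (gk j q2)) \/
                             h (gk j q1) = h (gk j q2).
  move=> j /Hp Hj; have [nj _] := gk_comm HQ HP Hh j n1.
  have := wk HQ HP Hh nj (ex_conn Hj); case/conn_ex => [->|H]; [by right | by left].
have key : forall m, l <= m <= k -> exists l', [/\ l <= l' <= m,
    h (gk l' q1) = h (gk l' q2) &
    forall j, l' < j <= m -> lt_plus (h (gk j q1)) (h (gk j q2))].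
  elim => [|m IH] Hm'.
    have l0 : l = 0 by lia.
    subst l; exists 0; split; [lia | by rewrite Hl | move=> j; lia].
  case: (eqVneq l m.+1) => [El|nl].
    exists l; split; [lia | by rewrite Hl | move=> j; lia].
  have [l' [Hl' E1 E2]] := IH ltac:(lia).
  case: (W m.+1 ltac:(lia)) => [lt|eq].
    exists l'; split; [lia | exact: E1 |].
    move=> j Hj; case: (eqVneq j m.+1) => [->//|nj]; apply: E2; lia.
  exists m.+1; split; [lia | exact: eq | move=> j; lia].
have [l' [Hl' E1 E2]] := key k ltac:(lia).
have lk' : l' != k by apply: contraNneq neq => <-; rewrite E1.
exists l'; split => //; try lia.
all: by rewrite -ha1 -ha2.
Qed.
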